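(* Let $\theta>0$, $\lambda>0$, $\mu>0$, $e>0$ with $\lambda<\mu+1$. Define the private optimal deployment $$\alpha^*(\theta)=\begin{cases}\mu+\theta(1-\lambda), & \lambda\theta\le 1,\\ \theta+\mu+1-2\sqrt{\lambda\theta}, & \lambda\theta>1,\end{cases}$$ the first-best deployment $$\alpha^{**}_{FB}(\theta)=\max\!\left\{0,\begin{cases}\mu+\theta(1-(1+e)\lambda), & (1+e)\lambda\theta\le 1,\\ \theta+\mu+1-2\sqrt{(1+e)\lambda\theta}, & (1+e)\lambda\theta>1,\end{cases}\right\}$$ and the second-best deployment $$\alpha^{**}_{SB}(\theta)=\max\!\left\{0,\begin{cases}\mu+\theta(1-(1+e)\lambda), & \lambda\theta\le 1,\\ \theta+\mu+1-(2+e)\sqrt{\lambda\theta}, & \lambda\theta>1.\end{cases}\right\}$$ Then: 1. $\alpha^{**}_{SB}(\theta)\le\alpha^{**}_{FB}(\theta)\le\alpha^*(\theta)$ for all $\theta>0$. 2. (First-best paradox conditions.) In the regime $(1+e)\lambda\theta\le1$, the derivative with respect to $\theta$ of $\mu+\theta(1-(1+e)\lambda)$ is negative iff $(1+e)\lambda>1$; in the regime $(1+e)\lambda\theta>1$, the derivative with respect to $\theta$ of $\theta+\mu+1-2\sqrt{(1+e)\lambda\theta}$ is negative iff $\theta<(1+e)\lambda$. Hence the first-best paradox region is weakly wider than the private one (private conditions: $\lambda>1$ in the regime $\lambda\theta\le1$, and $\theta<\lambda$ in the regime $\lambda\theta>1$). 3. (Second-best paradox conditions.) In the regime $\lambda\theta\le1$,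 the derivative with respect to $\theta$ of $\mu+\theta(1-(1+e)\lambda)$ is negative iff $(1+e)\lambda>1$; in the regime $\lambda\theta>1$, the derivative with respect to $\theta$ of $\theta+\mu+1-(2+e)\sqrt{\lambda\theta}$ is negative iff $\theta<\left(\frac{2+e}{2}\right)^2\lambda$. Hence the second-best paradox region is weakly wider than the private one. 4. There exist parameter values for which $\alpha^*$ is increasing in $\theta$ (outside the private paradox region) while the corresponding social deployment expression is decreasing in $\theta$ (inside the social paradox region).
   Context: $\theta$ is AI capability, $\lambda$ breach-loss magnitude, $\mu$ organizational readiness, $e$ breach externality parameter. The ''paradox region'' is the set of parameters where optimal deployment (private, first-best, or second-best as indicated) is decreasing in $\theta$. These deployment formulas arise from a firm with profit $(\theta+\mu)\alpha-\alpha^2/2-\frac{\alpha}{\alpha+d}\lambda\alpha\theta-d$; first-best maximizes this minus $e\frac{\alpha}{\alpha+d}\lambda\alpha\theta$ jointly over $(\alpha,d)$, second-best maximizes it over $\alpha$ with $d$ set at the firm's private optimum. *)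

(* Defs.v *)
From Stdlib Require Import Reals.
From Coquelicot Require Import Coquelicot.
Open Scope R_scope.

Definition alpha_priv (lam mu theta : R) : R :=
  if Rle_dec (lam * theta) 1 then mu + theta * (1 - lam)
  else theta + mu + 1 - 2 * sqrt (lam * theta).

Definition alpha_fb (lam mu e theta : R) : R :=
  Rmax 0 (if Rle_dec ((1 + e) * lam * theta) 1
          then mu + theta * (1 - (1 + e) * lam)
          else theta + mu + 1 - 2 * sqrt ((1 + e) * lam * theta)).

Definition alpha_sb (lam mu e theta : R) : R :=
  Rmax 0 (if Rle_dec (lam * theta) 1
          then mu + theta * (1 - (1 + e) * lam)
          else theta + mu + 1 - (2 + e) * sqrt (lam * theta)).

Definition slope_priv (lam mu theta : R) : R :=
  if Rle_dec (lam * theta) 1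
  then Derive (fun t => mu + t * (1 - lam)) theta
  else Derive (fun t => t + mu + 1 - 2 * sqrt (lam * t)) theta.

Definition slope_fb (lam mu e theta : R) : R :=
  if Rle_dec ((1 + e) * lam * theta) 1
  then Derive (fun t => mu + t * (1 - (1 + e) * lam)) theta
  else Derive (fun t => t + mu + 1 - 2 * sqrt ((1 + e) * lam * t)) theta.

Definition slope_sb (lam mu e theta : R) : R :=
  if Rle_dec (lam * theta) 1
  then Derive (fun t => mu + t * (1 - (1 + e) * lam)) theta
  else Derive (fun t => t + mu + 1 - (2 + e) * sqrt (lam * t)) theta.

Definition paradox_priv (lam mu theta : R) : Prop := slope_priv lam mu theta < 0.
Definition paradox_fb (lam mu e theta : R) : Prop := slope_fb lam mu e theta < 0.
Definition paradox_sb (lam mu e theta : R) : Prop := slope_sb lam mu e theta < 0.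

Definition params_ok (lam mu e : R) : Prop :=
  0 < lam /\ 0 < mu /\ 0 < e /\ lam < mu + 1.

(* Main.v *)
Require Import Defs.
From Stdlib Require Import Reals Lra Psatz.
From Coquelicot Require Import Coquelicot.
Open Scope R_scope.

Lemma D_lin (a b x : R) : Derive (fun t => a + t * b) x = b.
Proof. apply is_derive_unique. auto_derive; auto; ring. Qed.

Lemma D_sq (a k c x : R) : 0 < c -> 0 < x ->
  Derive (fun t => t + a + 1 - k * sqrt (c * t)) x = 1 - k * c / (2 * sqrt (c * x)).
Proof. intros Hc Hx. apply is_derive_unique. auto_derive.
  - nra.
  - field. apply Rgt_not_eq, sqrt_lt_R0; nra. Qed.

Lemma sq_facts (y : R) : 0 <= y -> 0 <= sqrt y /\ sqrt y * sqrt y = y.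
Proof. intros; split; [apply sqrt_pos| apply sqrt_sqrt; auto]. Qed.

Lemma rmax_mono a b : a <= b -> Rmax 0 a <= Rmax 0 b.
Proof. intros; unfold Rmax; repeat destruct Rle_dec; lra. Qed.

Lemma neg_iff k c x : 0 < c -> 0 < x -> 0 < k ->
  (1 - k * c / (2 * sqrt (c * x)) < 0 <-> 4 * x < k * k * c).
Proof. intros Hc Hx Hk. destruct (sq_facts (c*x)) as [H0 H1]; [nra|].
  assert (Hs: 0 < sqrt (c*x)) by (apply sqrt_lt_R0; nra).
  set (s := sqrt (c*x)) in *.
  assert (E: 1 - k * c / (2 * s) = (2*s - k*c)/(2*s)) by (field; lra).
  rewrite E. split; intro H.
  - assert (2*s - k*c < 0).
    { destruct (Rlt_or_le (2*s-k*c) 0); auto.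
      assert (0 <= (2*s-k*c)/(2*s)) by (apply Rdiv_le_0_compat; lra). lra. }
    assert (0 < c) by lra. nra.
  - assert (2*s - k*c < 0).
    { destruct (Rlt_or_le (2*s-k*c) 0); auto.
      assert (k*c <= 2*s) by lra. assert (0 < k*c) by nra.
      assert ((k*c)*(k*c) <= (2*s)*(2*s)) by (apply Rmult_le_compat; lra).
      nra. }
    apply Rdiv_neg_pos; lra.
Qed.

Lemma part1 lam mu e theta : 0 < lam -> 0 < mu -> 0 < e -> lam < mu + 1 -> 0 < theta ->
  alpha_sb lam mu e theta <= alpha_fb lam mu e theta /\
  alpha_fb lam mu e theta <= alpha_priv lam mu theta.
Proof.
  intros Hl Hm He Hlm Ht.
  assert (Ex: 0 <= lam*theta) by nra.
  assert (Ey: 0 <= (1+e)*lam*theta) by nra.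
  destruct (sq_facts _ Ex) as [sx0 sx1].
  destruct (sq_facts _ Ey) as [sy0 sy1].
  destruct (sq_facts (1+e)) as [u0 u1]; [lra|].
  assert (Hsy: sqrt ((1+e)*lam*theta) = sqrt (1+e) * sqrt (lam*theta)).
  { rewrite Rmult_assoc. apply sqrt_mult; lra. }
  set (sx := sqrt (lam*theta)) in *. set (sy := sqrt ((1+e)*lam*theta)) in *.
  set (u := sqrt (1+e)) in *.
  assert (Hxy: lam*theta <= (1+e)*lam*theta) by nra.
  unfold alpha_sb, alpha_fb, alpha_priv. fold sx sy.
  split.
  - apply rmax_mono. destruct (Rle_dec (lam*theta) 1); destruct (Rle_dec ((1+e)*lam*theta) 1).
    + nra.
    + assert (0 <= (sy-1)*(sy-1)) by nra. nra.
    + lra.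
    + assert (2*u <= 2+e) by nra. rewrite Hsy. nra.
  - destruct (Rle_dec (lam*theta) 1); destruct (Rle_dec ((1+e)*lam*theta) 1).
    + apply Rmax_lub.
      * destruct (Rle_dec lam 1); nra.
      * nra.
    + apply Rmax_lub.
      * destruct (Rle_dec lam 1); nra.
      * assert (1 < sy) by nra. nra.
    + lra.
    + assert (P: 0 <= theta + mu + 1 - 2 * sx).
      { pose proof (Rle_0_sqr (theta-lam)) as Q; unfold Rsqr in Q.
        destruct (Rle_dec (2*sx) (theta+lam)); [lra|].
        assert ((theta+lam)*(theta+lam) < (2*sx)*(2*sx)) by (apply Rmult_le_0_lt_compat; lra).
        nra. }
      apply Rmax_lub; [lra|].
      assert (sx <= sy). { unfold sx, sy. apply sqrt_le_1_alt. lra. }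
      lra.
Qed.

Theorem proposition8 (lam mu e : R) (Hlam : 0 < lam) (Hmu : 0 < mu) (He : 0 < e)
  (Hlm : lam < mu + 1) :
  (forall theta, 0 < theta ->
     alpha_sb lam mu e theta <= alpha_fb lam mu e theta /\
     alpha_fb lam mu e theta <= alpha_priv lam mu theta) /\
  (forall theta, 0 < theta ->
     ((1 + e) * lam * theta <= 1 ->
        (Derive (fun t => mu + t * (1 - (1 + e) * lam)) theta < 0 <-> (1 + e) * lam > 1)) /\
     ((1 + e) * lam * theta > 1 ->
        (Derive (fun t => t + mu + 1 - 2 * sqrt ((1 + e) * lam * t)) theta < 0
           <-> theta < (1 + e) * lam))) /\
  (forall theta, 0 < theta -> paradox_priv lam mu theta -> paradox_fb lam mu e theta) /\
  (forall theta, 0 < theta ->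
     (lam * theta <= 1 ->
        (Derive (fun t => mu + t * (1 - (1 + e) * lam)) theta < 0 <-> (1 + e) * lam > 1)) /\
     (lam * theta > 1 ->
        (Derive (fun t => t + mu + 1 - (2 + e) * sqrt (lam * t)) theta < 0
           <-> theta < ((2 + e) / 2) ^ 2 * lam))) /\
  (forall theta, 0 < theta -> paradox_priv lam mu theta -> paradox_sb lam mu e theta) /\
  (exists theta' lam' mu' e', 0 < theta' /\ params_ok lam' mu' e' /\
     slope_priv lam' mu' theta' > 0 /\ paradox_fb lam' mu' e' theta') /\
  (exists theta' lam' mu' e', 0 < theta' /\ params_ok lam' mu' e' /\
     slope_priv lam' mu' theta' > 0 /\ paradox_sb lam' mu' e' theta').
Proof.
  assert (Hc: 0 < (1+e)*lam) by nra.
  split; [intros; apply part1; auto|].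
  split.
  { intros theta Ht. split; intros _.
    - rewrite D_lin. lra.
    - rewrite D_sq by auto. rewrite neg_iff by lra. nra. }
  split.
  { intros theta Ht. unfold paradox_priv, paradox_fb, slope_priv, slope_fb.
    destruct (Rle_dec (lam*theta) 1); destruct (Rle_dec ((1+e)*lam*theta) 1);
      rewrite ?D_lin, ?D_sq by auto; rewrite ?neg_iff by lra; intro H.
    - nra.
    - assert (lam > 1) by lra. assert (theta < 1) by nra. nra.
    - nra.
    - nra. }
  split.
  { intros theta Ht. split; intros _.
    - rewrite D_lin. lra.
    - rewrite D_sq by auto. rewrite neg_iff by lra. split; intro; nra. }
  split.
  { intros theta Ht. unfold paradox_priv, paradox_sb, slope_priv, slope_sb.
    destruct (Rle_dec (lam*theta) 1);
      rewrite ?D_lin, ?D_sq by auto; rewrite ?neg_iff by lra; intro H; nra. }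
  split.
  - exists (1/2), (1/2), 1, 2. unfold params_ok, paradox_fb, slope_priv, slope_fb.
    repeat split; try lra;
    repeat destruct Rle_dec; try lra; rewrite ?D_lin; lra.
  - exists (1/2), (1/2), 1, 2. unfold params_ok, paradox_sb, slope_priv, slope_sb.
    repeat split; try lra;
    repeat destruct Rle_dec; try lra; rewrite ?D_lin; lra.
Qed.
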